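(* Let $\gamma\ge 1$ be a constant, $\kappa=\gamma^{1/4}$, and for $m\in\mathbb N$ let $n=\lfloor\gamma m\rfloor$, $N=n+m$. Let $b>0$ be a constant, $d=b\log N$, $p=d/\sqrt{mn}$. Let $\mathcal G$ be the random bipartite graph on $V_1=\{1,\dots,n\}$, $V_2=\{n+1,\dots,n+m\}$ in which each pair $\{x,y\}$, $x\in V_1,y\in V_2$, is an edge independently with probability $p$, and let $D^{(1)}=\mathrm{diag}\{D_x\}_{x\in V_1}$ be the diagonal matrix of degrees of the vertices in $V_1$. Let $h(u)=(1+u)\log(1+u)-u$ and assume $b>\kappa^2[h(\kappa^2-1)]^{-1}$. Then there exist constants $\epsilon>0$ and $\nu>0$ such that with probability at least $1-N^{-\nu}$, $$\|(I_n-d^{-1}D^{(1)})^{-1}\|\le\epsilon^{-1}.$$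
   Context: $\log$ is the natural logarithm; $\|\cdot\|$ is the operator norm. *)

(* Defs.v *)
From mathcomp Require Import all_boot all_order all_algebra.
From mathcomp Require Import all_classical all_reals all_analysis.
Import Order.TTheory GRing.Theory Num.Theory.
Set Implicit Arguments. Unset Strict Implicit. Unset Printing Implicit Defensive.
Local Open Scope ring_scope.
Local Open Scope classical_set_scope.

Definition hfun (R : realType) (u : R) : R := (1 + u) * ln (1 + u) - u.

Definition vnorm (R : realType) (k : nat) (v : 'cV[R]_k) : R :=
  Num.sqrt (\sum_(i < k) (v i 0) ^+ 2).

Definition opnorm (R : realType) (k l : nat) (A : 'M[R]_(k, l)) : R :=
  sup [set vnorm (A *m v) | v in [set v : 'cV[R]_l | vnorm v <= 1]].

Definition nfloor (R : realType) (gamma : R) (m : nat) : nat :=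
  Num.truncn (gamma * m%:R).

(* bipartite graphs between V1 = 'I_n and V2 = 'I_m: edge indicator for each pair *)
Definition bgraph (n m : nat) := {ffun 'I_n * 'I_m -> bool}.

Definition graph_weight (R : realType) (n m : nat) (p : R) (G : bgraph n m) : R :=
  \prod_(e : 'I_n * 'I_m) (if G e then p else 1 - p).

Definition gprob (R : realType) (n m : nat) (p : R) (E : pred (bgraph n m)) : R :=
  \sum_(G : bgraph n m | E G) graph_weight p G.

Definition deg1 (n m : nat) (G : bgraph n m) (x : 'I_n) : nat :=
  #|[set y : 'I_m | G (x, y)]|.

Definition Dmat1 (R : realType) (n m : nat) (G : bgraph n m) : 'M[R]_n :=
  diag_mx (\row_(x < n) (deg1 G x)%:R).

(* Main.v *)
Require Import Defs.
From mathcomp Require Import all_boot all_order all_algebra.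
From mathcomp Require Import all_classical all_reals all_analysis.
From mathcomp Require Import ring lra zify.
Import Order.TTheory GRing.Theory Num.Theory.
Local Open Scope ring_scope.




Lemma sum_prodF (R : realType) n m (F : 'I_n * 'I_m -> bool -> R) :
  \sum_(G : bgraph n m) \prod_e F e (G e) = \prod_e (F e true + F e false).
Proof.
rewrite -bigA_distr_bigA; apply: eq_bigr => e _; by rewrite big_bool.
Qed.

Lemma weight_ge0 (R : realType) n m (p : R) (G : bgraph n m) :
  0 <= p <= 1 -> 0 <= graph_weight p G.
Proof.
move=> /andP[p0 p1]; apply: prodr_ge0 => e _; case: (G e) => //.
by rewrite subr_ge0.
Qed.

Lemma weight_total (R : realType) n m (p : R) :
  \sum_(G : bgraph n m) graph_weight p G = 1.
Proof.
rewrite /graph_weight (@sum_prodF R n m (fun e (b : bool) => if b then p else 1 - p)).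
by apply: big1 => e _; rewrite addrC subrK.
Qed.

Lemma pow_deg (R : realType) n m (a : R) (G : bgraph n m) x :
  a ^+ deg1 G x = \prod_(e : 'I_n * 'I_m) (if (e.1 == x) && G e then a else 1).
Proof.
have -> : \prod_(e : 'I_n * 'I_m) (if (e.1 == x) && G e then a else 1) =
  \prod_i \prod_j (if (i == x) && G (i, j) then a else 1).
  by rewrite pair_bigA; apply: eq_bigr => -[i j] _.
rewrite (bigD1 x) //= [X in _ * X]big1 ?mulr1; last first.
  by move=> i /negbTE ->; rewrite big1.
rewrite eqxx /= -big_mkcond prodr_const /deg1.
congr (_ ^+ _); apply: eq_card => y. apply/idP/idP; rewrite in_setE /=. by []. by [].
Qed.

Lemma mgf (R : realType) n m (p a : R) x :
  \sum_(G : bgraph n m) graph_weight p G * a ^+ deg1 G x = (1 - p + p * a) ^+ m.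
Proof.
under eq_bigr => G _ do rewrite /graph_weight pow_deg -big_split /=.
rewrite (@sum_prodF R n m (fun e (b : bool) => (if b then p else 1 - p) * (if (e.1 == x) && b then a else 1))).
have -> : \prod_(e : 'I_n * 'I_m) (p * (if (e.1 == x) && true then a else 1) +
             (1 - p) * (if (e.1 == x) && false then a else 1)) =
  \prod_(i < n) \prod_(j < m) (p * (if (i == x) then a else 1) + (1 - p) * 1).
  by rewrite pair_bigA; apply: eq_bigr => -[i j] _; rewrite andbT andbF.
rewrite (bigD1 x) //= [X in _ * X]big1 ?mulr1; last first.
  move=> i /negbTE Hi; apply: big1 => j _; rewrite Hi /=.
  by rewrite !mulr1 addrC subrK.
rewrite eqxx /= prodr_const card_ord.
by rewrite addrC.
Qed.

Lemma gmarkov (R : realType) n m (p lam t : R) x :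
  0 <= p <= 1 -> 0 <= lam ->
  gprob p (fun G : bgraph n m => t <= (deg1 G x)%:R) <=
    expR (- (lam * t)) * (1 - p + p * expR lam) ^+ m.
Proof.
move=> hp hl.
rewrite -(@mgf R n m p (expR lam) x) mulr_sumr /gprob big_mkcond /=.
apply: ler_sum => G _.
have hw := @weight_ge0 R n m p G hp.
rewrite mulrCA -expRM_natl -expRD.
case: ifP => H.
  rewrite ler_peMr //; apply: le_trans (expR_ge1Dx _).
  by rewrite lerDl [_ * lam]mulrC addrC -mulrBr mulr_ge0 // subr_ge0.
by apply: mulr_ge0 => //; apply: expR_ge0.
Qed.

Lemma gunion (R : realType) n m (p : R) (E : pred (bgraph n m)) (B : 'I_n -> pred (bgraph n m)) :
  0 <= p <= 1 -> (forall G, (forall x, ~~ B x G) -> E G) ->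
  1 - \sum_x gprob p (B x) <= gprob p E.
Proof.
move=> hp hE.
rewrite -(@weight_total R n m p) (bigID E) /= lerBlDr lerD2l.
rewrite /gprob.
under [X in _ <= X]eq_bigr => x _ do rewrite big_mkcond /=.
rewrite exchange_big /= [X in X <= _]big_mkcond /=.
apply: ler_sum => G _.
case: ifP => HE; last first.
  by apply: sumr_ge0 => x _; case: ifP => // _; exact: (@weight_ge0 R n m p).
case: (pickP (fun x => B x G)) => [x Hx | H]; last first.
  by move: HE; rewrite hE // => y; rewrite H.
rewrite (bigD1 x) //= Hx lerDl.
by apply: sumr_ge0 => y _; case: ifP => // _; exact: (@weight_ge0 R n m p).
Qed.


Lemma A_diag (R : realType) n m (G : bgraph n m) (d : R) :
  1%:M - d^-1 *: Dmat1 R G = diag_mx (\row_x (1 - d^-1 * (deg1 G x)%:R)).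
Proof.
apply/matrixP => i j; rewrite !mxE.
by case: (i == j); rewrite ?mulr1n ?mulr0n ?subr0 ?mulr0 ?subrr.
Qed.

Lemma diag_good (R : realType) n (c : 'I_n -> R) (eps : R) : 0 < eps ->
  (forall x, eps < c x) ->
  (diag_mx (\row_x c x) \in unitmx) && (opnorm (invmx (diag_mx (\row_x c x))) <= eps^-1).
Proof.
move=> he hc.
have cpos x : 0 < c x by apply: lt_trans (hc x).
set A := diag_mx _.
set B := diag_mx (\row_x (c x)^-1).
have AB : A *m B = 1%:M.
  rewrite mul_diag_mx; apply/matrixP => i j; rewrite !mxE.
  case: eqP => [->|_]; rewrite ?mulr1n ?mulr0n ?mulr0 //.
  by rewrite divff // gt_eqF.
have [Au _] := mulmx1_unit AB.
have invA : invmx A = B.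
  by rewrite -[invmx A]mulmx1 -AB mulmxA mulVmx // mul1mx.
rewrite Au invA /=.
rewrite /opnorm; apply: ge_sup.
  exists (vnorm (B *m 0)); exists 0 => //; rewrite /=.
  rewrite /vnorm big1 ?sqrtr0 // => i _; by rewrite mxE expr0n.
move=> _ [v Hv <-].
have Hs : \sum_(i < n) v i 0 ^+ 2 <= 1.
  move: Hv; rewrite /vnorm /= -[X in _ <= X -> _]sqrtr1 ler_sqrt //.
have H' : \sum_(i < n) ((B *m v) i 0) ^+ 2 <= eps^-1 ^+ 2.
  apply: le_trans (_ : \sum_(i < n) eps^-1 ^+ 2 * v i 0 ^+ 2 <= _).
    apply: ler_sum => i _; rewrite mul_diag_mx !mxE exprMn.
    apply: ler_wpM2r; first exact: sqr_ge0.
    rewrite !expr2; apply: ler_pM; rewrite ?invr_ge0 ?ltW //.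
      by rewrite ltf_pV2 ?posrE.
    by rewrite ltf_pV2 ?posrE.
  rewrite -mulr_sumr; apply: ler_piMr => //; exact: sqr_ge0.
apply: le_trans (ler_wsqrtr H') _.
by rewrite sqrtr_sqr ger0_norm // invr_ge0 ltW.
Qed.


Lemma le_sqrt_sq (R : realType) (x y : R) : 0 <= x -> x ^+ 2 <= y -> x <= Num.sqrt y.
Proof.
move=> hx hxy; rewrite -[X in X <= _](ger0_norm hx) -sqrtr_sqr.
exact: ler_wsqrtr.
Qed.

Theorem lemma6p7 (R : realType) (gamma b : R) :
  1 <= gamma -> 0 < b ->
  let kappa := gamma `^ (1 / 4) in
  0 < hfun (kappa ^+ 2 - 1) ->
  kappa ^+ 2 / hfun (kappa ^+ 2 - 1) < b ->
  exists eps nu : R, 0 < eps /\ 0 < nu /\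
    exists M : nat, forall m : nat, (M <= m)%N ->
      let n := nfloor gamma m in
      let N := (n + m)%N in
      let d := b * ln (N%:R : R) in
      let p := d / Num.sqrt (m%:R * n%:R) in
      1 - (N%:R : R) `^ (- nu) <=
        gprob p (fun G : bgraph n m =>
          let A := 1%:M - d^-1 *: Dmat1 R G in
          (A \in unitmx) && (opnorm (invmx A) <= eps^-1)).
Proof.
move=> hg hb kappa hh hbig.
have g0 : 0 < gamma by apply: lt_le_trans hg.
have k1 : 1 <= kappa.
  apply: le_trans (_ : gamma `^ 0 <= _); first by rewrite powRr0.
  by apply: ler_powR => //; rewrite divr_ge0.
have k0 : 0 <= kappa by apply: le_trans k1.
have a2 : (kappa ^+ 2) ^+ 2 = gamma.
  rewrite -exprM -powR_mulrn // -powRrM.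
  have -> : 1 / 4 * (2 * 2)%N%:R = 1 :> R.
    by rewrite div1r mulVf // pnatr_eq0.
  by rewrite powRr1 // ltW.
move: hh hbig a2; set a := kappa ^+ 2 => hh hbig a2.
have a1 : 1 <= a by rewrite /a expr2; nra.
have a0 : 0 < a by apply: lt_le_trans a1.
set L := ln a.
have L0 : 0 <= L by apply: ln_ge0.
have hE : hfun (a - 1) = a * L - (a - 1).
  by rewrite /hfun addrCA subrr addr0.
move: hh hbig; rewrite hE => hh hbig.
set c := (a * L - (a - 1)) / a.
have cE : c = L - (a - 1) / a.
  by rewrite /c mulrBl mulrAC divff ?mul1r // gt_eqF.
have bc : 1 < b * c.
  move: hbig; rewrite ltr_pdivrMr // => H.
  by rewrite /c mulrA ltr_pdivlMr // mul1r.
set eta := (b * c - 1) / (2 * b).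
set nu := (b * c - 1) / 2.
set eps := eta / (2 * (L + 1)).
set s1 := (1 + eta / 2) / a.
have eta0 : 0 < eta by rewrite /eta divr_gt0 ?subr_gt0 // mulr_gt0.
have nu0 : 0 < nu by rewrite /nu divr_gt0 ?subr_gt0.
have eps0 : 0 < eps by rewrite /eps divr_gt0 // mulr_gt0 // ltr_wpDl.
exists eps, nu; split => //; split => //.
exists (Num.truncn (s1 ^+ 2 / eta) + Num.truncn (8 * b ^+ 2) + 1)%N.
move=> m hm /=.
set n := nfloor gamma m.
set N := (n + m)%N.
set d := b * ln N%:R.
set p := d / _.
have mS : s1 ^+ 2 / eta < m%:R.
  apply: lt_le_trans (truncnS_gt _) _; rewrite ler_nat.
  by apply: leq_trans hm; rewrite addn1 ltnS; apply: leq_addr.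
have m8 : 8 * b ^+ 2 < m%:R.
  apply: lt_le_trans (truncnS_gt _) _; rewrite ler_nat.
  by apply: leq_trans hm; rewrite addn1 ltnS; apply: leq_addl.
have mr0 : 0 < m%:R :> R by apply: le_lt_trans m8; rewrite mulr_ge0 // sqr_ge0.
have nm : m%:R <= n%:R :> R.
  rewrite ler_nat /n /nfloor truncn_ge_nat; last by rewrite mulr_ge0 // ltW.
  by rewrite ler_peMl // ltW.
have ngt : gamma * m%:R - 1 < n%:R.
  have := truncnS_gt (gamma * m%:R); rewrite -natr1 => H.
  rewrite /n /nfloor; lra.
have NE : N%:R = n%:R + m%:R :> R by rewrite natrD.
have N1 : 1 < N%:R :> R.
  rewrite NE; have : 1 <= m%:R :> R.
    by rewrite (_ : 1 = 1%:R) // ler_nat -(ltr_nat R) // .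
  lra.
have lnN : 0 < ln N%:R :> R by apply: ln_gt0.
have d0 : 0 < d by rewrite /d mulr_gt0.
have mn0 : 0 < m%:R * n%:R :> R by rewrite mulr_gt0 //; apply: lt_le_trans nm.
have sq0 : 0 < Num.sqrt (m%:R * n%:R :> R) by rewrite sqrtr_gt0.
have s10 : 0 <= s1 by rewrite /s1; apply: divr_ge0; [apply: addr_ge0 => //; apply: divr_ge0 => //; exact: ltW | exact: ltW].
have s1a : s1 * a = 1 + eta / 2 by rewrite /s1 mulrAC -mulrA divff ?mulr1 // gt_eqF.
have mle : m%:R <= s1 * Num.sqrt (m%:R * n%:R).
  rewrite -[s1](ger0_norm s10) -sqrtr_sqr -sqrtrM ?sqr_ge0 //.
  apply: le_sqrt_sq; first exact: ltW.
  have h1 : s1 ^+ 2 * gamma = (1 + eta / 2) ^+ 2 by rewrite -a2 -exprMn s1a.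
  have h2 : m%:R <= s1 ^+ 2 * n%:R.
    have : s1 ^+ 2 <= eta * m%:R.
      by move: mS; rewrite ltr_pdivrMr // mulrC => /ltW.
    have : s1 ^+ 2 * (gamma * m%:R - 1) <= s1 ^+ 2 * n%:R.
      by apply: ler_wpM2l; [exact: sqr_ge0 | exact: ltW].
    move: h1; nra.
  have h3 := ler_wpM2l (ltW mr0) h2.
  by rewrite expr2; apply: le_trans h3 _; rewrite mulrCA.
have lnsq : ln N%:R <= 2 * Num.sqrt (N%:R) :> R.
  have sN : 0 < Num.sqrt (N%:R : R) by rewrite sqrtr_gt0; exact: (lt_trans ltr01 N1).
  have -> : ln (N%:R : R) = 2 * ln (Num.sqrt N%:R).
    by rewrite mulr_natl -lnXn // sqr_sqrtr // ler0n.
  have := @le_ln1Dx R (Num.sqrt N%:R - 1).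
  rewrite addrCA subrr addr0 => H; have : -1 < Num.sqrt (N%:R : R) - 1 by lra.
  move/H; lra.
have n0 : 0 <= n%:R :> R by rewrite ler0n.
have dle : d <= Num.sqrt (m%:R * n%:R).
  apply: le_trans (_ : b * (2 * Num.sqrt N%:R) <= _).
    by rewrite /d ler_wpM2l // ltW.
  apply: le_sqrt_sq; first by rewrite !mulr_ge0 ?sqrtr_ge0 // ltW.
  rewrite !exprMn sqr_sqrtr ?ler0n // NE.
  have e1 : 0 <= (m%:R - 8 * b ^+ 2) * n%:R by rewrite mulr_ge0 // subr_ge0 ltW.
  have e2 : 0 <= b ^+ 2 * (n%:R - m%:R) by rewrite mulr_ge0 ?sqr_ge0 // subr_ge0.
  nra.
have p0 : 0 <= p by rewrite /p divr_ge0 ?ltW.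
have p1 : p <= 1 by rewrite /p ler_pdivrMr // mul1r.
have hp : 0 <= p <= 1 by rewrite p0 p1.
have mp : m%:R * p <= d * s1.
  rewrite /p mulrCA; apply: ler_wpM2l; first exact: ltW.
  by rewrite ler_pdivrMr // mulrC.
set q := (a - 1) / a.
have q0 : 0 <= q by rewrite /q; apply: divr_ge0; lra.
have q1 : q <= 1 by rewrite /q ler_pdivrMr // mul1r; lra.
have s1q : s1 * (a - 1) = (1 + eta / 2) * q by rewrite /s1 /q mulrAC -mulrA.
have epsL : eps * L <= eta / 2.
  rewrite /eps mulrAC ler_pdivrMr; last by rewrite mulr_gt0 //; lra.
  have -> : eta / 2 * (2 * (L + 1)) = eta * (L + 1) by field.
  nra.
have bce : b * (c - eta) = 1 + nu.
  rewrite /eta /nu; field; by rewrite gt_eqF.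
have F3 : 1 + nu <= b * ((1 - eps) * L - s1 * (a - 1)).
  rewrite s1q.
  have h1 : 0 <= b * (eta / 2 - eps * L) by apply: mulr_ge0; lra.
  have h2 : 0 <= b * eta * (1 - q) by apply: mulr_ge0; [apply: mulr_ge0|]; lra.
  move: bce; rewrite cE -/q; nra.
have Px x : gprob p (fun G : bgraph n m => (1 - eps) * d <= (deg1 G x)%:R) <=
    expR (- ((1 + nu) * ln N%:R)).
  have Mk := @gmarkov R n m p L ((1 - eps) * d) x hp L0.
  apply: le_trans Mk _.
  rewrite {2}/L lnK ?posrE //.
  apply: le_trans (_ : expR (- (L * ((1 - eps) * d))) * expR (m%:R * (p * (a - 1))) <= _).
    rewrite ler_wpM2l ?expR_ge0 // expRM_natl.
    apply: lerXn2r; rewrite ?nnegrE ?expR_ge0 //; first by nra.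
    apply: le_trans (expR_ge1Dx _); lra.
  rewrite -expRD ler_expR.
  have F1 : m%:R * (p * (a - 1)) <= d * s1 * (a - 1).
    by rewrite mulrA ler_wpM2r // subr_ge0.
  have e : - (L * ((1 - eps) * d)) + d * s1 * (a - 1) =
      - (ln N%:R * (b * ((1 - eps) * L - s1 * (a - 1)))) by rewrite /d; ring.
  apply: le_trans (_ : - (L * ((1 - eps) * d)) + d * s1 * (a - 1) <= _); first lra.
  rewrite e lerN2 mulrC; apply: ler_wpM2l => //; exact: ltW.
have Sb : \sum_x gprob p (fun G : bgraph n m => (1 - eps) * d <= (deg1 G x)%:R)
    <= N%:R `^ (- nu).
  apply: le_trans (ler_sum _ (fun x _ => Px x)) _.
  rewrite sumr_const card_ord -[_ *+ n]mulr_natr /powR ifF; last first.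
    by apply: gt_eqF; exact: (lt_trans ltr01 N1).
  apply: le_trans (_ : expR (- ((1 + nu) * ln N%:R)) * N%:R <= _).
    by rewrite ler_wpM2l ?expR_ge0 // NE; lra.
  have eN : expR (ln N%:R) = N%:R :> R by rewrite lnK // posrE; exact: (lt_trans ltr01 N1).
  rewrite -[X in _ * X]eN -expRD ler_expR; lra.
have HE : forall G : bgraph n m,
    (forall x, ~~ ((1 - eps) * d <= (deg1 G x)%:R)) ->
    (1%:M - d^-1 *: Dmat1 R G \in unitmx) &&
    (opnorm (invmx (1%:M - d^-1 *: Dmat1 R G)) <= eps^-1).
  move=> G HB; rewrite A_diag.
  apply: (@diag_good R n (fun x => 1 - d^-1 * (deg1 G x)%:R) eps) => // x.
  have := HB x; rewrite -ltNge => Hx.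
  have : d^-1 * (deg1 G x)%:R < 1 - eps by rewrite mulrC ltr_pdivrMr.
  lra.
apply: le_trans (@gunion R n m p _ _ hp HE).
by rewrite lerD2l lerN2.
Qed.
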